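(* Let $\bar\pi^*$ be an optimal (cost-minimizing) policy for $\bar{\mathcal M}$, with state-action value $\bar Q^*$ and state value $\bar V^*$, and let $\bar A^*(s,a)=\bar Q^*(s,a)-\bar Q^*(s,\bar\pi^* )$. Let $G_0$ be the set of admissible intervention rules $(\bar Q,\mu,0)$ with $\bar Q(d_0,\mu)=\bar V^*(d_0)$. For any $\mathcal G=(\bar Q,\mu,0)\in G_0$ with advantage $\bar A(s,a)=\bar Q(s,a)-\bar Q(s,\mu)$, and any policy $\pi$, let $\pi'=\mathcal G(\pi)$. Then for $d^{\pi'}$-almost every state $s$, $\bar A(s,a)\ge\bar A^*(s,a)$ for all $a\in\mathcal A$.
   Context: $\mathcal M=(\mathcal S,\mathcal A,P,r,\gamma)$ is a discounted MDP with discrete state and action spaces, discount $\gamma\in[0,1)$, initial distribution $d_0$. $\mathcal S$ contains two distinguished states $s_\triangleright,s_\circ$; $\mathcal S_{\mathrm{unsafe}}=\{s_\triangleright,s_\circ\}$, $\mathcal S_{\mathrm{safe}}=\mathcal S\setminus\mathcal S_{\mathrm{unsafe}}$; from $s_\triangleright$ every action leads to $s_\circ$ w.p. 1, $s_\circ$ is absorbing, $d_0(s_\circ)=0$. Cost $c(s,a)=\mathbb 1\{s=s_\triangleright\}$; $\bar{\mathcal M}=(\mathcal S,\mathcal A,P,c,\gamma)$; an optimal policy of $\bar{\mathcal M}$ minimizes expected discounted cost from every state. For $g:\mathcal S\times\mathcal A\to\mathbb R$, $g(s,\mu)=\mathbb E_{a\sim\mu(\cdot|s)}g(s,a)$, $g(d_0,\mu)=\mathbb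 E_{s\sim d_0}g(s,\mu)$. For a policy $\pi$, $d^{\pi}(s)=(1-\gamma)\sum_t\gamma^t\Pr(s_t=s)$ for trajectories of $\pi$ in $\mathcal M$ from $s_0\sim d_0$. Intervention rule: a triple $\mathcal G=(\bar Q,\mu,\eta)$, $\eta\in[0,1]$, backup policy $\mu$, $\bar Q:\mathcal S_{\mathrm{safe}}\times\mathcal A\to[0,1]$ extended by $\bar Q(s_\triangleright,a)=1$, $\bar Q(s_\circ,a)=0$; intervention set $\mathcal I=\{(s,a)\in\mathcal S_{\mathrm{safe}}\times\mathcal A:\bar Q(s,a)-\bar Q(s,\mu)>\eta\}$; shielded policy $\mathcal G(\pi)(a|s)=\pi(a|s)\mathbb 1\{(s,a)\notin\mathcal I\}+w(s)\mu(a|s)$ with $w(s)=\sum_{\tilde a:(s,\tilde a)\in\mathcal I}\pi(\tilde a|s)$. Admissible: for all $s\in\mathcal S_{\mathrm{safe}},a$: $\bar Q(s,a)\in[0,\gamma]$ and $\bar Q(s,a)\ge c(s,a)+\gamma\mathbb E_{s'\sim P(\cdot|s,a)}[\bar Q(s',\mu)]$. *)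

(* Defs.v *)
From HB Require Import structures.
From mathcomp Require Import all_boot all_order all_algebra.
From mathcomp Require Import all_classical all_reals.
From mathcomp Require Import ereal topology normedtype sequences esum.
Set Implicit Arguments. Unset Strict Implicit. Unset Printing Implicit Defensive.
Import Order.TTheory GRing.Theory Num.Theory.
Local Open Scope classical_set_scope.
Local Open Scope ring_scope.
Local Open Scope ereal_scope.

Section MDP.
Variables (R : realType) (S A : choiceType).

Definition psum (T : choiceType) (f : T -> \bar R) : \bar R :=
  \esum_(x in [set: T]) f x.

Definition is_dist (T : choiceType) (p : T -> R) : Prop :=
  (forall x, (0 <= p x)%R) /\ psum (fun x => (p x)%:E) = 1.

Definition is_policy (pi : S -> A -> R) : Prop := forall s, is_dist (pi s).

Definition is_kernel (P : S -> A -> S -> R) : Prop :=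
  forall s a, is_dist (P s a).

Definition Epol (pi : S -> A -> R) (s : S) (g : A -> \bar R) : \bar R :=
  psum (fun a => (pi s a)%:E * g a).

Definition Enext (P : S -> A -> S -> R) (s : S) (a : A) (g : S -> \bar R)
  : \bar R := psum (fun s' => (P s a s')%:E * g s').

Definition Edist (d : S -> R) (g : S -> \bar R) : \bar R :=
  psum (fun s => (d s)%:E * g s).

Definition cost (s_tri : S) (s : S) (a : A) : R := if s == s_tri then 1%R else 0%R.

Fixpoint stdist (P : S -> A -> S -> R) (pi : S -> A -> R) (d : S -> \bar R)
  (t : nat) : S -> \bar R :=
  match t with
  | 0%N => d
  | t'.+1 => fun s' => psum (fun s =>
       stdist P pi d t' s * Epol pi s (fun a => (P s a s')%:E))
  end.

Definition dirac_st (s0 : S) : S -> \bar R := fun s => if s == s0 then 1 else 0.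

Definition Vcost (P : S -> A -> S -> R) (gamma : R) (s_tri : S)
  (pi : S -> A -> R) (d : S -> \bar R) : \bar R :=
  \sum_(t <oo) ((gamma ^+ t)%:E *
     psum (fun s => stdist P pi d t s * Epol pi s (fun a => (cost s_tri s a)%:E))).

Definition Vbar P gamma s_tri pi (s : S) : \bar R :=
  Vcost P gamma s_tri pi (dirac_st s).

Definition Qbar P gamma s_tri pi (s : S) (a : A) : \bar R :=
  (cost s_tri s a)%:E + gamma%:E * Enext P s a (Vbar P gamma s_tri pi).

Definition optimal_policy P gamma s_tri (pi : S -> A -> R) : Prop :=
  is_policy pi /\ forall pi', is_policy pi' ->
    forall s, Vbar P gamma s_tri pi s <= Vbar P gamma s_tri pi' s.

Definition occupancy P gamma (pi : S -> A -> R) (d0 : S -> R) (s : S) : \bar R :=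
  (1 - gamma)%:E * \sum_(t <oo) ((gamma ^+ t)%:E *
      stdist P pi (fun x => (d0 x)%:E) t s).

Definition safe (s_tri s_circ s : S) : Prop := s <> s_tri /\ s <> s_circ.

(* extension of Qb : S_safe x A -> [0,1] by Qb(s_tri,.) = 1, Qb(s_circ,.) = 0 *)
Definition Qext (s_tri s_circ : S) (Qb : S -> A -> R) (s : S) (a : A) : R :=
  if s == s_tri then 1%R else if s == s_circ then 0%R else Qb s a.

Definition Qmu s_tri s_circ Qb (mu : S -> A -> R) (s : S) : \bar R :=
  Epol mu s (fun a => (Qext s_tri s_circ Qb s a)%:E).

Definition interv s_tri s_circ Qb mu (eta : R) (s : S) (a : A) : Prop :=
  safe s_tri s_circ s /\
  (Qext s_tri s_circ Qb s a)%:E - Qmu s_tri s_circ Qb mu s > eta%:E.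

Definition shield s_tri s_circ Qb mu eta (pi : S -> A -> R) : S -> A -> R :=
  fun s a =>
    let w := fine (psum (fun a' =>
               (if `[< interv s_tri s_circ Qb mu eta s a' >] then pi s a' else 0%R)%:E)) in
    ((if `[< interv s_tri s_circ Qb mu eta s a >] then 0%R else pi s a)
      + w * mu s a)%R.

Definition admissible P gamma s_tri s_circ (Qb : S -> A -> R) (mu : S -> A -> R)
  : Prop :=
  forall s a, safe s_tri s_circ s ->
    (0 <= Qb s a <= gamma)%R /\
    (cost s_tri s a)%:E + gamma%:E *
       Enext P s a (Qmu s_tri s_circ Qb mu) <= (Qb s a)%:E.

Definition in_G0 P gamma s_tri s_circ d0 (pistar : S -> A -> R)
  (Qb : S -> A -> R) (mu : S -> A -> R) : Prop :=
  is_policy mu /\ admissible P gamma s_tri s_circ Qb mu /\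
  Edist d0 (Qmu s_tri s_circ Qb mu) = Edist d0 (Vbar P gamma s_tri pistar).

End MDP.

(* Main.v *)
Require Import Defs.
From HB Require Import structures.
From mathcomp Require Import all_boot all_order all_algebra.
From mathcomp Require Import all_classical all_reals.
From mathcomp Require Import ereal topology normedtype sequences esum.
From mathcomp Require Import lra.
Import Order.TTheory GRing.Theory Num.Theory.
Local Open Scope classical_set_scope.
Local Open Scope ring_scope.
Local Open Scope ereal_scope.
Set Warnings "-notation-overridden,-ambiguous-paths".

Section Gen.
Variable R : realType.

Lemma psum_ge0 (T : choiceType) (f : T -> \bar R) :
  (forall i, 0 <= f i) -> 0 <= psum f.
Proof. by move=> f0; apply: esum_ge0 => i _; exact: f0. Qed.

Lemma psum_ge1 (T : choiceType) (f : T -> \bar R) i :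
  (forall i, 0 <= f i) -> f i <= psum f.
Proof.
move=> f0; apply: esum_ge; exists [set i]; first by split => //; exact: finite_set1.
by rewrite fsbig_set1.
Qed.

Lemma le_psum (T : choiceType) (f g : T -> \bar R) :
  (forall i, f i <= g i) -> psum f <= psum g.
Proof. by move=> fg; apply: le_esum => i _; exact: fg. Qed.

Lemma psumD (T : choiceType) (f g : T -> \bar R) :
  (forall i, 0 <= f i) -> (forall i, 0 <= g i) ->
  psum (fun i => f i + g i) = psum f + psum g.
Proof. by move=> f0 g0; apply: esumD => i _; [exact: f0|exact: g0]. Qed.

Lemma psum_only (T : choiceType) (f : T -> \bar R) t :
  (forall i, i <> t -> f i = 0) -> 0 <= f t -> psum f = f t.
Proof.
move=> f0 ft; rewrite /psum (esumID [set t]); last first.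
  by move=> i _; have [->//|/eqP/f0->] := eqVneq i t.
rewrite setTI esum_set1// [X in _ + X]esum1 ?adde0// => i [_ /= it].
exact: (f0 i it).
Qed.

Lemma psum_eq0 (T : choiceType) (f : T -> \bar R) :
  (forall i, f i = 0) -> psum f = 0.
Proof. by move=> f0; apply: esum1 => i _; exact: f0. Qed.

Lemma psumZl_le (T : choiceType) (x : \bar R) (f : T -> \bar R) :
  0 <= x -> (forall i, 0 <= f i) -> psum (fun i => x * f i) <= x * psum f.
Proof.
move=> x0 f0; apply: ge_ereal_sup => _ [X [finX _] <-] /=.
rewrite -ge0_mule_fsumr//; apply: lee_wpmul2l => //.
by apply: ereal_sup_ubound; exists X.
Qed.

Lemma psumZl (T : choiceType) (x : \bar R) (f : T -> \bar R) :
  0 <= x -> (forall i, 0 <= f i) -> psum (fun i => x * f i) = x * psum f.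
Proof.
move=> x0 f0; apply/eqP; rewrite eq_le psumZl_le //=.
case: x x0 => [r||] //; rewrite ?lee_fin => r0.
  have [->|rgt0] := eqVneq r 0%R.
    by rewrite mul0e; apply: psum_ge0 => i; rewrite mul0e.
  have rp : (0 < r)%R by rewrite lt_def rgt0 r0.
  have : psum f <= (r^-1)%:E * psum (fun i => r%:E * f i).
    have := @psumZl_le T (r^-1)%:E (fun i => r%:E * f i).
    rewrite lee_fin invr_ge0 r0 => /(_ isT) h.
    apply: le_trans (h _); last by move=> i; apply: mule_ge0 => //; rewrite lee_fin.
    by apply: le_psum => i; rewrite muleA -EFinM mulVf// mul1e.
  move=> h; rewrite -(@lee_pmul2l _ (r^-1)%:E) ?lte_fin ?invr_gt0//.
  by rewrite muleA -EFinM mulVf// mul1e.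
have [P0|Pn0] := eqVneq (psum f) 0.
  by rewrite P0 mule0; apply: psum_ge0 => i; apply: mule_ge0.
have Pgt : 0 < psum f by rewrite lt_def Pn0 psum_ge0.
have [_ [X [finX _] <-] XP] := ereal_sup_gt Pgt.
rewrite gt0_mulye// leye_eq; apply/eqP.
apply/eq_infty => y; apply: esum_ge; exists X => //.
by rewrite -ge0_mule_fsumr// gt0_mulye ?leey.
Qed.

Lemma psumZr (T : choiceType) (x : \bar R) (f : T -> \bar R) :
  0 <= x -> (forall i, 0 <= f i) -> psum (fun i => f i * x) = psum f * x.
Proof.
move=> x0 f0; rewrite muleC -psumZl//; apply: eq_esum => i _; exact: muleC.
Qed.

Lemma psum_swap (T1 T2 : choiceType) (f : T1 -> T2 -> \bar R) :
  (forall i j, 0 <= f i j) ->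
  psum (fun i => psum (fun j => f i j)) = psum (fun j => psum (fun i => f i j)).
Proof.
move=> f0; rewrite /psum esum_esum; last by move=> i j _ _; exact: f0.
rewrite esum_esum; last by move=> i j _ _; exact: f0.
apply: (@reindex_esum R _ _ _ _ (fun x : T2 * T1 => (x.2, x.1))
   (fun k : T1 * T2 => f k.1 k.2)).
split.
- by move=> [a b] _.
- by move=> [a b] [c d] _ _ /= [-> ->].
- by move=> [a b] _; exists (b, a).
Qed.

Lemma psum_gt0 (T : choiceType) (f : T -> \bar R) :
  (forall i, 0 <= f i) -> 0 < psum f -> exists i, 0 < f i.
Proof.
move=> f0 pos; have [//|nex] := pselect (exists i, 0 < f i).
have : psum f = 0.
  apply: psum_eq0 => i; apply/eqP; rewrite eq_le f0 andbT leNgt.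
  by apply/negP => h; apply: nex; exists i.
by move=> h; rewrite h ltxx in pos.
Qed.

Lemma psum_ge2 (T : choiceType) (f : T -> \bar R) x y :
  x <> y -> (forall i, 0 <= f i) -> f x + f y <= psum f.
Proof.
move=> xy f0.
have -> : f x + f y = psum (fun i => (if i == x then f x else 0) + (if i == y then f y else 0)).
  rewrite psumD; last 2 first.
  - by move=> i; case: ifP.
  - by move=> i; case: ifP.
  rewrite (@psum_only _ (fun i => if i == x then f x else 0) x); last 2 first.
  - by move=> i /eqP/negPf ->.
  - by rewrite eqxx.
  rewrite (@psum_only _ (fun i => if i == y then f y else 0) y); last 2 first.
  - by move=> i /eqP/negPf ->.
  - by rewrite eqxx.
  by rewrite !eqxx.
apply: le_psum => i; have [->|ix] := eqVneq i x.
  by have /eqP/negPf -> := xy; rewrite adde0.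
by have [->|iy] := eqVneq i y; rewrite add0e.
Qed.

Lemma strict_avg (T : choiceType) (w : T -> R) (F G : T -> \bar R) x :
  (forall i, (0 <= w i)%R) -> (forall i, 0 <= G i) -> (forall i, G i <= F i) ->
  (forall i, G i \is a fin_num) ->
  psum (fun i => (w i)%:E * G i) \is a fin_num -> (0 < w x)%R -> G x < F x ->
  psum (fun i => (w i)%:E * G i) < psum (fun i => (w i)%:E * F i).
Proof.
move=> w0 G0 GF Gf sf wx Gx.
have dpos : 0 <= F x - G x by rewrite sube_ge0; [exact: ltW|by rewrite Gf].
apply: (@lt_le_trans _ _ (psum (fun i => (w i)%:E * G i +
   (if i == x then (w x)%:E * (F x - G x) else 0)))).
  rewrite psumD; last 2 first.
  - by move=> i; apply: mule_ge0; rewrite ?lee_fin.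
  - by move=> i; case: ifP => // _; apply: mule_ge0; rewrite ?lee_fin.
  rewrite (@psum_only _ (fun i => if i == x then (w x)%:E * (F x - G x) else 0) x).
  - rewrite eqxx lteDl // mule_gt0 ?lte_fin // sube_gt0 //.
  - by move=> i /eqP/negPf ->.
  - by rewrite eqxx; apply: mule_ge0; rewrite ?lee_fin.
apply: le_psum => i; have [->|ix] := eqVneq i x.
  rewrite -muleDr //; last exact: fin_num_adde_defr.
  by rewrite addeC subeK.
by rewrite adde0; apply: lee_wpmul2l; rewrite ?lee_fin.
Qed.
End Gen.
Section MDP.
Variables (R : realType) (S A : choiceType).
Variables (P : S -> A -> S -> R) (gamma : R) (s_tri : S).
Hypothesis P0 : forall s a s', (0 <= P s a s')%R.
Hypothesis g0 : (0 <= gamma)%R.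
Implicit Types (pi : S -> A -> R) (s : S) (a : A) (d f h : S -> \bar R) (g : A -> \bar R) (t : nat).

Definition cpi (pi : S -> A -> R) s := Epol pi s (fun a => (cost R s_tri s a)%:E).
Definition Kf (pi : S -> A -> R) (f : S -> \bar R) s :=
  Epol pi s (fun a => Enext P s a f).
Definition Xt pi d t := psum (fun s => stdist P pi d t s * cpi pi s).

Lemma cost_ge0 s (a : A) : (0 <= cost R s_tri s a)%R.
Proof. by rewrite /cost; case: ifP. Qed.

Lemma Epol_ge0 pi s g : (forall a, (0 <= pi s a)%R) -> (forall a, 0 <= g a) ->
  0 <= Epol pi s g.
Proof. by move=> h1 h2; apply: psum_ge0 => a; apply: mule_ge0; rewrite ?lee_fin. Qed.

Lemma Enext_ge0 s a f : (forall s, 0 <= f s) -> 0 <= Enext P s a f.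
Proof. by move=> h; apply: psum_ge0 => s'; apply: mule_ge0; rewrite ?lee_fin. Qed.

Lemma cpi_ge0 pi s : (forall a, (0 <= pi s a)%R) -> 0 <= cpi pi s.
Proof. by move=> h; apply: Epol_ge0 => // a; rewrite lee_fin cost_ge0. Qed.

Lemma Kf_ge0 pi f s : (forall a, (0 <= pi s a)%R) -> (forall s, 0 <= f s) ->
  0 <= Kf pi f s.
Proof. by move=> h1 h2; apply: Epol_ge0 => // a; apply: Enext_ge0. Qed.

Lemma stdist_ge0 pi d t s : (forall s a, (0 <= pi s a)%R) -> (forall s, 0 <= d s) ->
  0 <= stdist P pi d t s.
Proof.
move=> h1 h2; elim: t s => //= t IH s'; apply: psum_ge0 => s.
apply: mule_ge0 => //; apply: Epol_ge0 => // a; rewrite lee_fin; exact: P0.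
Qed.

Lemma dirac_psum s0 (h : S -> \bar R) : 0 <= h s0 ->
  psum (fun s => dirac_st R s0 s * h s) = h s0.
Proof.
move=> h0; rewrite (@psum_only _ _ _ s0).
- by rewrite /dirac_st eqxx mul1e.
- by move=> s /eqP/negPf; rewrite /dirac_st => ->; rewrite mul0e.
- by rewrite /dirac_st eqxx mul1e.
Qed.

Lemma EK pi s f : (forall a, (0 <= pi s a)%R) -> (forall s, 0 <= f s) ->
  psum (fun s' => Epol pi s (fun a => (P s a s')%:E) * f s') = Kf pi f s.
Proof.
move=> h1 h2; rewrite /Kf /Epol /Enext.
transitivity (psum (fun s' => psum (fun a => (pi s a)%:E * ((P s a s')%:E * f s')))).
  apply: eq_esum => s' _; rewrite -psumZr//; last first.
    by move=> a; apply: mule_ge0; rewrite lee_fin.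
  by apply: eq_esum => a _; rewrite muleA.
rewrite psum_swap; last by move=> *; apply: mule_ge0; [rewrite lee_fin|apply: mule_ge0; rewrite ?lee_fin].
apply: eq_esum => a _; rewrite psumZl// ?lee_fin// => s'.
by apply: mule_ge0; rewrite ?lee_fin.
Qed.

Lemma SL pi d f t : (forall s a, (0 <= pi s a)%R) -> (forall s, 0 <= d s) ->
  (forall s, 0 <= f s) ->
  psum (fun s' => stdist P pi d t.+1 s' * f s') =
  psum (fun s => stdist P pi d t s * Kf pi f s).
Proof.
move=> h1 h2 h3 /=.
have E0 s s' : 0 <= Epol pi s (fun a => (P s a s')%:E).
  by apply: Epol_ge0 => // a; rewrite lee_fin.
transitivity (psum (fun s' => psum (fun s =>
   stdist P pi d t s * (Epol pi s (fun a => (P s a s')%:E) * f s')))).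
  apply: eq_esum => s' _; rewrite -psumZr//; last first.
    by move=> s; apply: mule_ge0 => //; exact: stdist_ge0.
  by apply: eq_esum => s _; rewrite muleA.
rewrite psum_swap; last first.
  by move=> s s'; apply: mule_ge0; [exact: stdist_ge0|apply: mule_ge0].
apply: eq_esum => s _; rewrite psumZl//; last 2 first.
- exact: stdist_ge0.
- by move=> s'; apply: mule_ge0.
by rewrite EK.
Qed.

Lemma dirac_ge0 s0 s : 0 <= dirac_st R s0 s.
Proof. by rewrite /dirac_st; case: ifP. Qed.

Lemma stdist_lin pi d t h : (forall s a, (0 <= pi s a)%R) -> (forall s, 0 <= d s) ->
  (forall s, 0 <= h s) ->
  psum (fun s => stdist P pi d t s * h s) =
  psum (fun s0 => d s0 * psum (fun s => stdist P pi (dirac_st R s0) t s * h s)).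
Proof.
move=> p0 d0; elim: t h => [|t IH] h h0.
  by apply: eq_esum => s0 _ /=; rewrite dirac_psum.
rewrite SL// IH; last by move=> s; apply: Kf_ge0.
apply: eq_esum => s0 _; rewrite SL//; exact: dirac_ge0.
Qed.

Lemma stdist_shift pi d t :
  stdist P pi (stdist P pi d 1) t = stdist P pi d t.+1.
Proof. by elim: t => //= t ->. Qed.

Lemma Xt_ge0 pi d t : (forall s a, (0 <= pi s a)%R) -> (forall s, 0 <= d s) ->
  0 <= Xt pi d t.
Proof.
move=> p0 d0; apply: psum_ge0 => s; apply: mule_ge0; first exact: stdist_ge0.
exact: cpi_ge0.
Qed.

Lemma VcostE pi d : Vcost P gamma s_tri pi d = \sum_(t <oo) ((gamma ^+ t)%:E * Xt pi d t).
Proof. by []. Qed.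

Lemma Vcost_ge0 pi d : (forall s a, (0 <= pi s a)%R) -> (forall s, 0 <= d s) ->
  0 <= Vcost P gamma s_tri pi d.
Proof.
move=> p0 d0; rewrite VcostE; apply: nneseries_ge0 => t _ _.
by apply: mule_ge0; [rewrite lee_fin exprn_ge0|exact: Xt_ge0].
Qed.

Lemma Vbar_ge0 pi s : (forall s a, (0 <= pi s a)%R) -> 0 <= Vbar P gamma s_tri pi s.
Proof. by move=> p0; apply: Vcost_ge0 => // s'; exact: dirac_ge0. Qed.

Lemma Vcost_lin pi d : (forall s a, (0 <= pi s a)%R) -> (forall s, 0 <= d s) ->
  Vcost P gamma s_tri pi d = psum (fun s0 => d s0 * Vbar P gamma s_tri pi s0).
Proof.
move=> p0 d0; rewrite VcostE.
have gt0 t : (0 <= (gamma ^+ t)%:E) by rewrite lee_fin exprn_ge0.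
have X0 s0 t : 0 <= Xt pi (dirac_st R s0) t by apply: Xt_ge0 => // s; exact: dirac_ge0.
rewrite nneseries_esumT; last by move=> t; apply: mule_ge0 => //; apply: Xt_ge0.
rewrite -/(psum _).
transitivity (psum (fun t => psum (fun s0 => (gamma ^+ t)%:E * (d s0 * Xt pi (dirac_st R s0) t)))).
  apply: eq_esum => t _; rewrite /Xt stdist_lin //; last by move=> s; exact: cpi_ge0.
  by rewrite psumZl // => s0; apply: mule_ge0 => //; exact: X0.
rewrite psum_swap; last by move=> t s0; apply: mule_ge0 => //; apply: mule_ge0.
apply: eq_esum => s0 _.
rewrite /Vbar VcostE nneseries_esumT; last by move=> t; apply: mule_ge0.
rewrite -/(psum _) -psumZl//; last by move=> t; apply: mule_ge0.
by apply: eq_esum => t _; rewrite muleCA.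
Qed.
Lemma series_recl (f : nat -> \bar R) : (forall n, 0 <= f n) ->
  \sum_(t <oo) f t = f 0%N + \sum_(t <oo) f t.+1.
Proof.
move=> f0; rewrite (@nneseries_recl _ xpredT) //.
rewrite -nneseries_addn //.
congr (_ + _); apply/congr_lim/funext => n; apply: eq_bigr => i _; by rewrite addn1.
Qed.

Lemma Vcost_shift pi d : (forall s a, (0 <= pi s a)%R) -> (forall s, 0 <= d s) ->
  Vcost P gamma s_tri pi d =
  Xt pi d 0 + gamma%:E * Vcost P gamma s_tri pi (stdist P pi d 1).
Proof.
move=> p0 d0; rewrite !VcostE series_recl; last first.
  by move=> n; apply: mule_ge0; [rewrite lee_fin exprn_ge0|exact: Xt_ge0].
rewrite expr0 mul1e -nneseriesZl; last first.
  move=> n _; apply: mule_ge0; [by rewrite lee_fin exprn_ge0|apply: Xt_ge0 => //].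
  by move=> s; apply: stdist_ge0.
congr (_ + _).
apply: (@eq_eseriesr _ _ _ xpredT 0%N) => t _.
by rewrite /Xt stdist_shift muleA -EFinM exprS.
Qed.

Lemma Vfix pi s : (forall s a, (0 <= pi s a)%R) ->
  Vbar P gamma s_tri pi s =
  cpi pi s + gamma%:E * Kf pi (Vbar P gamma s_tri pi) s.
Proof.
move=> p0; rewrite {1}/Vbar Vcost_shift//; last exact: dirac_ge0.
rewrite Vcost_lin//; last by move=> s'; apply: stdist_ge0 => // x; exact: dirac_ge0.
rewrite SL//; last 2 first.
- exact: dirac_ge0.
- by move=> x; apply: Vbar_ge0.
rewrite /Xt /= !dirac_psum //.
- by apply: Kf_ge0 => // x; exact: Vbar_ge0.
- exact: cpi_ge0.
Qed.
Lemma series_le_ub (a : nat -> \bar R) M : (forall n, 0 <= a n) ->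
  (forall n, \sum_(t < n) a t <= M) -> \sum_(t <oo) a t <= M.
Proof.
move=> a0 aM.
have nd := @ereal_nondecreasing_series R a xpredT 0%N (fun n _ _ => a0 n).
have /cvg_lim -> := ereal_nondecreasing_cvgn nd.
  apply: ge_ereal_sup => _ [n _ <-] /=.
  by rewrite big_mkord; exact: aM.
by [].
Qed.

Lemma IL_partial pi f : (forall s a, (0 <= pi s a)%R) -> (forall s, 0 <= f s) ->
  (forall s, cpi pi s + gamma%:E * Kf pi f s <= f s) ->
  forall n d, (forall s, 0 <= d s) ->
  \sum_(t < n) ((gamma ^+ t)%:E * Xt pi d t) +
    (gamma ^+ n)%:E * psum (fun s => stdist P pi d n s * f s)
  <= psum (fun s => d s * f s).
Proof.
move=> p0 f0 Tf; have gt0 t : (0 <= (gamma ^+ t)%:E) by rewrite lee_fin exprn_ge0.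
have Ge : 0 <= gamma%:E by rewrite lee_fin.
have first_step d : (forall s, 0 <= d s) ->
    Xt pi d 0 + gamma%:E * psum (fun s => stdist P pi d 1 s * f s)
    <= psum (fun s => d s * f s).
  move=> d0; rewrite SL //= /Xt /=.
  rewrite -psumZl //; last by move=> s; apply: mule_ge0 => //; apply: Kf_ge0.
  rewrite -psumD; last 2 first.
  - by move=> s; apply: mule_ge0 => //; apply: cpi_ge0.
  - by move=> s; apply: mule_ge0 => //; apply: mule_ge0 => //; apply: Kf_ge0.
  apply: le_psum => s; rewrite muleCA -ge0_muleDr; last 2 first.
  - exact: cpi_ge0.
  - by apply: mule_ge0 => //; apply: Kf_ge0.
  by apply: lee_wpmul2l.
elim=> [|n IH] d d0.
  by rewrite big_ord0 add0e expr0 mul1e.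
apply: le_trans (first_step d d0).
have d10 s : 0 <= stdist P pi d 1 s by apply: stdist_ge0.
have := IH _ d10; rewrite !stdist_shift => IH'.
rewrite big_ord_recl expr0 mul1e -addeA leeD2l //.
apply: le_trans (lee_wpmul2l Ge IH').
rewrite ge0_muleDr; last 2 first.
- by apply: sume_ge0 => t _; apply: mule_ge0 => //; apply: Xt_ge0.
- apply: mule_ge0 => //; apply: psum_ge0 => s; apply: mule_ge0 => //.
  exact: stdist_ge0.
rewrite ge0_sume_distrr; last by move=> t _; apply: mule_ge0 => //; apply: Xt_ge0.
apply: leeD; last by rewrite muleA -EFinM exprS.
rewrite le_eqVlt; apply/orP; left; apply/eqP; apply: eq_bigr => t _.
have -> : (lift ord0 t : nat) = t.+1 by [].
by rewrite /Xt stdist_shift muleA -EFinM exprS.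
Qed.

Lemma IL0 pi f d : (forall s a, (0 <= pi s a)%R) -> (forall s, 0 <= f s) ->
  (forall s, cpi pi s + gamma%:E * Kf pi f s <= f s) -> (forall s, 0 <= d s) ->
  Vcost P gamma s_tri pi d <= psum (fun s => d s * f s).
Proof.
move=> p0 f0 Tf d0; rewrite VcostE; apply: series_le_ub.
  by move=> t; apply: mule_ge0; [by rewrite lee_fin exprn_ge0|exact: Xt_ge0].
move=> n; apply: (le_trans _ (IL_partial _ _ p0 f0 Tf n _ d0)).
rewrite leeDl //; apply: mule_ge0; first by rewrite lee_fin exprn_ge0.
by apply: psum_ge0 => s; apply: mule_ge0 => //; exact: stdist_ge0.
Qed.
Lemma Epol_dirac pi s a0 g : (forall a, pi s a = if a == a0 then 1%R else 0%R) ->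
  0 <= g a0 -> Epol pi s g = g a0.
Proof.
move=> hpi g0'; rewrite /Epol (@psum_only _ _ _ a0).
- by rewrite hpi eqxx mul1e.
- by move=> a /eqP/negPf an; rewrite hpi an mul0e.
- by rewrite hpi eqxx mul1e.
Qed.

Lemma Enext_le s a f h : (forall s, 0 <= f s) -> (forall s, f s <= h s) ->
  Enext P s a f <= Enext P s a h.
Proof.
move=> f0 fh; apply: le_psum => s'; apply: lee_wpmul2l; rewrite ?lee_fin //.
Qed.

Lemma Kf_le pi s f h : (forall s a, (0 <= pi s a)%R) -> (forall s, 0 <= f s) ->
  (forall s, f s <= h s) -> Kf pi f s <= Kf pi h s.
Proof.
move=> p0 f0 fh; apply: le_psum => a; apply: lee_wpmul2l; rewrite ?lee_fin //.
exact: Enext_le.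
Qed.

Lemma BO pistar : optimal_policy P gamma s_tri pistar ->
  forall s0 a0, Vbar P gamma s_tri pistar s0 <= Qbar P gamma s_tri pistar s0 a0.
Proof.
move=> [pol opt] s0 a0.
have p0 s a : (0 <= pistar s a)%R by have [] := pol s; move=> h _; exact: h.
set V := Vbar P gamma s_tri pistar.
have V0 s : 0 <= V s by apply: Vbar_ge0.
rewrite leNgt; apply/negP => H.
pose pia s a := if s == s0 then (if a == a0 then 1 else 0)%R else pistar s a.
have pia0 s a : (0 <= pia s a)%R by rewrite /pia; case: ifP => _ //; case: ifP.
have piaP : is_policy pia.
  move=> s; split; first by move=> a; exact: pia0.
  have [es|ns] := eqVneq s s0; last by rewrite /pia (negPf ns); have [] := pol s.
  rewrite /pia es eqxx.
  rewrite (@psum_only _ _ (fun a => ((if a == a0 then 1 else 0)%R)%:E) a0) ?eqxx //.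
  by move=> a /eqP/negPf ->.
pose f s := if s == s0 then Qbar P gamma s_tri pistar s0 a0 else V s.
have fV s : f s <= V s by rewrite /f; case: ifP => // /eqP ->; exact: ltW.
have Q0 : 0 <= Qbar P gamma s_tri pistar s0 a0.
  apply: adde_ge0; first by rewrite lee_fin cost_ge0.
  by apply: mule_ge0; [rewrite lee_fin|apply: Enext_ge0].
have f0 s : 0 <= f s by rewrite /f; case: ifP.
have Tf s : cpi pia s + gamma%:E * Kf pia f s <= f s.
  rewrite /f; case: (eqVneq s s0) => [->|ns].
    rewrite /cpi /Kf !(@Epol_dirac _ _ a0); try (by move=> a; rewrite /pia eqxx);
      try (by rewrite lee_fin cost_ge0); try (by apply: Enext_ge0 => x; apply: f0).
    apply: leeD => //; apply: lee_wpmul2l; first by rewrite lee_fin.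
    exact: Enext_le.

  have E g : Epol pia s g = Epol pistar s g by rewrite /Epol /pia (negPf ns).
  rewrite /cpi /Kf !E -/(cpi pistar s) -/(Kf pistar f s) [X in _ <= X]/V Vfix //.
  apply: leeD => //; apply: lee_wpmul2l; first by rewrite lee_fin.
  exact: Kf_le.
have := @IL0 pia f (dirac_st R s0) pia0 f0 Tf (dirac_ge0 s0).
rewrite dirac_psum // /f eqxx => H2.
have := opt pia piaP s0; rewrite -/V => H3.
by have := le_trans H3 H2; rewrite leNgt H.
Qed.
Variables (s_circ : S) (d0 : S -> R) (pistar Qb mu pi : S -> A -> R).
Hypothesis g1 : (gamma < 1)%R.
Hypothesis hneq : s_tri <> s_circ.
Hypothesis hPt : forall a, P s_tri a s_circ = 1%R.
Hypothesis hPc : forall a, P s_circ a s_circ = 1%R.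
Hypothesis hkern : is_kernel P.
Hypothesis hd0 : is_dist d0.
Hypothesis hopt : optimal_policy P gamma s_tri pistar.
Hypothesis hG0 : in_G0 P gamma s_tri s_circ d0 pistar Qb mu.
Hypothesis hpi : is_policy pi.

Local Notation U := (Qmu s_tri s_circ Qb mu).
Local Notation V := (Vbar P gamma s_tri pistar).
Local Notation Qs := (Qbar P gamma s_tri pistar).
Local Notation Qx := (Qext s_tri s_circ Qb).

Lemma mu0 s a : (0 <= mu s a)%R.
Proof. by have [h _] := hG0; have [] := h s; move=> h1 _; exact: h1. Qed.
Lemma mu1 s : psum (fun a => (mu s a)%:E) = 1.
Proof. by have [h _] := hG0; have [] := h s. Qed.
Lemma ps0 s a : (0 <= pistar s a)%R.
Proof. by have [h _] := hopt; have [] := h s; move=> h1 _; exact: h1. Qed.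
Lemma ps1 s : psum (fun a => (pistar s a)%:E) = 1.
Proof. by have [h _] := hopt; have [] := h s. Qed.
Lemma adm : admissible P gamma s_tri s_circ Qb mu.
Proof. by have [_ []] := hG0. Qed.

Lemma safe_cases s : [\/ safe s_tri s_circ s, s = s_tri | s = s_circ].
Proof.
have [->|nt] := eqVneq s s_tri; first by apply: Or32.
have [->|nc] := eqVneq s s_circ; first by apply: Or33.
by apply: Or31; split; apply/eqP.
Qed.

Lemma Pconc s a s' : (s = s_tri \/ s = s_circ) -> s' <> s_circ -> P s a s' = 0%R.
Proof.
move=> hs ns.
have h1 : P s a s_circ = 1%R by case: hs => ->.
have H : (P s a s_circ)%:E + (P s a s')%:E <= psum (fun x => (P s a x)%:E).
  by apply: psum_ge2 => [|x]; [exact: nesym|rewrite lee_fin].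
rewrite (hkern s a).2 h1 -EFinD lee_fin in H.
by apply/eqP; rewrite eq_le P0 andbT; lra.
Qed.
Lemma Enext_conc s a f : (s = s_tri \/ s = s_circ) -> 0 <= f s_circ ->
  Enext P s a f = f s_circ.
Proof.
move=> hs f0; rewrite /Enext (@psum_only _ _ _ s_circ).
- have -> : P s a s_circ = 1%R by case: hs => ->.
  by rewrite mul1e.
- by move=> x nx; rewrite Pconc // mul0e.
- by apply: mule_ge0 => //; rewrite lee_fin.
Qed.

Lemma Qext_tri a : Qx s_tri a = 1%R.
Proof. by rewrite /Qext eqxx. Qed.
Lemma Qext_circ a : Qx s_circ a = 0%R.
Proof.
rewrite /Qext; have /negPf -> : s_circ != s_tri by apply/eqP/nesym.
by rewrite eqxx.
Qed.
Lemma Qext_safe s a : safe s_tri s_circ s -> Qx s a = Qb s a.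
Proof. by move=> [/eqP/negPf h1 /eqP/negPf h2]; rewrite /Qext h1 h2. Qed.

Lemma Qext_ge0 s a : (0 <= Qx s a)%R.
Proof.
have [hs|->|->] := safe_cases s.
- by rewrite Qext_safe //; have [/andP[]] := adm s a hs.
- by rewrite Qext_tri.
- by rewrite Qext_circ.
Qed.

Lemma Qext_le1 s a : (Qx s a <= 1)%R.
Proof.
have [hs|->|->] := safe_cases s.
- rewrite Qext_safe //; have [/andP[_ h] _] := adm s a hs.
  by apply: le_trans h _; apply: ltW.
- by rewrite Qext_tri.
- by rewrite Qext_circ.
Qed.

Lemma U_ge0 s : 0 <= U s.
Proof. by apply: Epol_ge0 => // a; [exact: mu0|rewrite lee_fin Qext_ge0]. Qed.

Lemma U_le1 s : U s <= 1.
Proof.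
rewrite -(mu1 s); apply: le_psum => a; rewrite -[X in _ <= X]mule1.
by apply: lee_wpmul2l; rewrite ?lee_fin ?mu0 ?Qext_le1.
Qed.

Lemma U_fin s : U s \is a fin_num.
Proof. by rewrite ge0_fin_numE ?U_ge0 // (le_lt_trans (U_le1 s)) // ltry. Qed.

Lemma U_tri : U s_tri = 1.
Proof. by rewrite -(mu1 s_tri); apply: eq_esum => a _; rewrite Qext_tri mule1. Qed.

Lemma U_circ : U s_circ = 0.
Proof. by apply: psum_eq0 => a; rewrite Qext_circ mule0. Qed.

Lemma step_adm s a :
  (cost R s_tri s a)%:E + gamma%:E * Enext P s a U <= (Qx s a)%:E.
Proof.
have [hs|->|->] := safe_cases s.
- by rewrite Qext_safe //; have [_ h] := adm s a hs.
- rewrite Enext_conc; [|by left|exact: U_ge0].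
  by rewrite U_circ mule0 adde0 Qext_tri /cost eqxx.
- rewrite Enext_conc; [|by right|exact: U_ge0].
  rewrite U_circ mule0 adde0 Qext_circ /cost.
  by have /negPf -> : s_circ != s_tri by apply/eqP/nesym.
Qed.

Lemma TU s : cpi mu s + gamma%:E * Kf mu U s <= U s.
Proof.
have Ge : 0 <= gamma%:E by rewrite lee_fin.
rewrite /cpi /Kf /Epol -psumZl //; last first.
  by move=> a; apply: mule_ge0; rewrite ?lee_fin ?mu0 //; apply: Enext_ge0 => x; exact: U_ge0.
rewrite -psumD; last 2 first.
- by move=> a; apply: mule_ge0; rewrite lee_fin ?mu0 ?cost_ge0.
- move=> a; apply: mule_ge0 => //; apply: mule_ge0; rewrite ?lee_fin ?mu0 //.
  by apply: Enext_ge0 => x; exact: U_ge0.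
apply: le_psum => a; rewrite muleCA -ge0_muleDr; last 2 first.
- by rewrite lee_fin cost_ge0.
- by apply: mule_ge0 => //; apply: Enext_ge0 => x; exact: U_ge0.
by apply: lee_wpmul2l; [rewrite lee_fin mu0|exact: step_adm].
Qed.

Lemma V_le_U s : V s <= U s.
Proof.
have [pol opt] := hopt.
have mpol : is_policy mu by have [] := hG0.
apply: (le_trans (opt mu mpol s)).
have := @IL0 mu U (dirac_st R s) mu0 U_ge0 TU (dirac_ge0 s).
by rewrite dirac_psum // U_ge0.
Qed.

Lemma V_ge0 s : 0 <= V s.
Proof. by apply: Vbar_ge0 => ? ?; exact: ps0. Qed.

Lemma V_le1 s : V s <= 1.
Proof. exact: le_trans (V_le_U s) (U_le1 s). Qed.

Lemma V_fin s : V s \is a fin_num.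
Proof. by rewrite ge0_fin_numE ?V_ge0 // (le_lt_trans (V_le1 s)) // ltry. Qed.

Lemma Qs_le s a : safe s_tri s_circ s -> Qs s a <= (Qb s a)%:E.
Proof.
move=> hs; have [_ h] := adm s a hs; apply: le_trans h.
apply: leeD => //; apply: lee_wpmul2l; first by rewrite lee_fin.
by apply: Enext_le => x; [exact: V_ge0|exact: V_le_U].
Qed.

Lemma V_le_Qb s a : safe s_tri s_circ s -> V s <= (Qb s a)%:E.
Proof. by move=> hs; exact: (le_trans (@BO pistar hopt s a) (Qs_le s a hs)). Qed.

Lemma W_ge s : V s <= Epol pistar s (Qs s).
Proof.
rewrite -[X in X <= _]mul1e -(ps1 s) -psumZr; last 2 first.
- exact: V_ge0.
- by move=> a; rewrite lee_fin ps0.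
apply: le_psum => a; apply: lee_wpmul2l; first by rewrite lee_fin ps0.
exact: BO.
Qed.
Local Notation pi' := (shield s_tri s_circ Qb mu 0%R pi).

Lemma pi0 s a : (0 <= pi s a)%R.
Proof. by have [] := hpi s; move=> h _; exact: h. Qed.

Lemma pi'0 s a : (0 <= pi' s a)%R.
Proof.
rewrite /shield /=; apply: addr_ge0.
  by case: ifP => _ //; exact: pi0.
apply: mulr_ge0; last exact: mu0.
by apply: fine_ge0; apply: psum_ge0 => a'; case: ifP => _; rewrite lee_fin ?pi0.
Qed.

Lemma mul_gt0_split (x y : \bar R) : 0 <= x -> 0 <= y -> 0 < x * y -> 0 < x /\ 0 < y.
Proof. by move=> x0 y0; rewrite mule_ge0_gt0 // => /andP. Qed.

Lemma Qb_le_V s a : safe s_tri s_circ s -> U s <= V s -> (0 < pi' s a)%R ->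
  (Qb s a)%:E <= V s.
Proof.
move=> hs UV; rewrite /shield /=.
case: (asboolP (interv s_tri s_circ Qb mu 0 s a)) => hint.
  rewrite add0r => wpos.
  have mupos : (0 < mu s a)%R.
    rewrite lt_def mu0 andbT; apply/negP => /eqP m0.
    by rewrite m0 mulr0 ltxx in wpos.
  rewrite leNgt; apply/negP => VQ.
  have := @strict_avg R A (mu s) (fun a => (Qx s a)%:E) (fun=> V s) a (mu0 s)
    (fun _ => V_ge0 s).
  have H1 : forall a', V s <= (Qx s a')%:E by move=> a'; rewrite Qext_safe //; exact: V_le_Qb.
  have E : psum (fun i => (mu s i)%:E * V s) = V s.
    by rewrite psumZr ?mu1 ?mul1e ?V_ge0 // => i; rewrite lee_fin mu0.
  move=> /(_ H1 (fun _ => V_fin s)); rewrite E => /(_ (V_fin s) mupos).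
  rewrite Qext_safe // => /(_ VQ) => VU.
  by have := lt_le_trans VU UV; rewrite ltxx.
move=> _; apply: le_trans UV.
have : ~ (0%:E < (Qx s a)%:E - U s) by move=> h; apply: hint.
rewrite Qext_safe // => /negP; rewrite -leNgt sube_le0 //.
Qed.
Lemma psum_fin (T : choiceType) (w : T -> R) (F : T -> \bar R) :
  (forall i, (0 <= w i)%R) -> psum (fun i => (w i)%:E) = 1 ->
  (forall i, 0 <= F i) -> (forall i, F i <= 1) ->
  psum (fun i => (w i)%:E * F i) \is a fin_num.
Proof.
move=> w0 w1 F0 F1; rewrite ge0_fin_numE; last first.
  by apply: psum_ge0 => i; apply: mule_ge0; rewrite ?lee_fin.
apply: (@le_lt_trans _ _ 1); last by rewrite ltry.
rewrite -w1; apply: le_psum => i; rewrite -[X in _ <= X]mule1.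
by apply: lee_wpmul2l; rewrite ?lee_fin.
Qed.

Lemma reach t : (0 < gamma ^+ t)%R -> forall s,
  0 < stdist P pi' (fun x => (d0 x)%:E) t s -> U s <= V s.
Proof.
have d00 x : (0 <= d0 x)%R by have [h _] := hd0; exact: h.
elim: t => [|t IH] gt s.
  rewrite /= => ds; rewrite leNgt; apply/negP => VU.
  have := @strict_avg R S d0 U V s d00 V_ge0 V_le_U V_fin.
  move=> /(_ (@psum_fin S d0 V d00 hd0.2 V_ge0 V_le1)).
  rewrite lte_fin in ds => /(_ ds VU).
  have [_ [_ E]] := hG0; rewrite /Edist in E; rewrite E ltxx //.
have gp : (0 < gamma)%R.
  rewrite lt_def g0 andbT; apply/negP => /eqP g00.
  by rewrite g00 expr0n /= ltxx in gt.
have gt' : (0 < gamma ^+ t)%R by apply: exprn_gt0.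
move=> /= H.
have st0 x : 0 <= stdist P pi' (fun x => (d0 x)%:E) t x.
  by apply: stdist_ge0; [exact: pi'0|move=> y; rewrite lee_fin].
have ep0 x y : 0 <= Epol pi' x (fun a => (P x a y)%:E).
  by apply: Epol_ge0 => a; [exact: pi'0|rewrite lee_fin].
have pi0x x a : 0 <= (pi' x a)%:E by rewrite lee_fin pi'0.
have P0x x a y : 0 <= (P x a y)%:E by rewrite lee_fin.
have nn s0 : 0 <= stdist P pi' (fun x => (d0 x)%:E) t s0 *
    Epol pi' s0 (fun a => (P s0 a s)%:E) by apply: mule_ge0.
have [s0 h] := @psum_gt0 R S _ nn H.
have [h1 h2] := @mul_gt0_split _ _ (st0 s0) (ep0 s0 s) h.
have [a ha] := @psum_gt0 R A _ (fun a => mule_ge0 (pi0x s0 a) (P0x s0 a s)) h2.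
have [ha1 ha2] := @mul_gt0_split _ _ (pi0x s0 a) (P0x s0 a s) ha.
rewrite !lte_fin in ha1 ha2.
have UV := IH gt' s0 h1.
have [hs|e|e] := safe_cases s0; last 2 first.
- have -> : s = s_circ.
    apply: contrapT => ns; move: ha2; rewrite Pconc ?ltxx //; by left.
  by rewrite U_circ V_ge0.
- have -> : s = s_circ.
    apply: contrapT => ns; move: ha2; rewrite Pconc ?ltxx //; by right.
  by rewrite U_circ V_ge0.
have hQ := Qb_le_V s0 a hs UV ha1.
rewrite leNgt; apply/negP => VU.
have lt := @strict_avg R S (P s0 a) U V s (P0 s0 a) V_ge0 V_le_U V_fin
  (@psum_fin S (P s0 a) V (P0 s0 a) (hkern s0 a).2 V_ge0 V_le1) ha2 VU.
have [_ hadm] := adm s0 a hs.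
have hBO := @BO pistar hopt s0 a.
have cfin : (cost R s_tri s0 a)%:E \is a fin_num by [].
have : (cost R s_tri s0 a)%:E + gamma%:E * Enext P s0 a V <
       (cost R s_tri s0 a)%:E + gamma%:E * Enext P s0 a U.
  by rewrite lteD2lE // lte_pmul2l // lte_fin.
move=> lt2; have := le_trans (le_trans hadm hQ) hBO.
by rewrite /Qbar leNgt lt2.
Qed.
Lemma occ_reach s : 0 < occupancy P gamma pi' d0 s -> U s <= V s.
Proof.
rewrite /occupancy => H.
have d00 x : (0 <= d0 x)%R by have [h _] := hd0; exact: h.
have tn t : 0 <= (gamma ^+ t)%:E * stdist P pi' (fun x => (d0 x)%:E) t s.
  apply: mule_ge0; first by rewrite lee_fin exprn_ge0.
  by apply: stdist_ge0; [exact: pi'0|move=> y; rewrite lee_fin].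
have ser0 := @nneseries_ge0 R _ xpredT 0%N (fun n _ _ => tn n).
have g1' : 0 <= (1 - gamma)%:E by rewrite lee_fin subr_ge0 ltW.
have [_ H2] := @mul_gt0_split _ _ g1' ser0 H.
move: H2; rewrite nneseries_esumT // -/(psum _) => H2.
have [t ht] := @psum_gt0 R _ _ tn H2.
have st0 : 0 <= stdist P pi' (fun x => (d0 x)%:E) t s.
  by apply: stdist_ge0; [exact: pi'0|move=> y; rewrite lee_fin].
have gt0 : 0 <= (gamma ^+ t)%:E by rewrite lee_fin exprn_ge0.
have [h1 h2] := @mul_gt0_split _ _ gt0 st0 ht.
rewrite lte_fin in h1; exact: (@reach t h1 s h2).
Qed.

Lemma Qs_unsafe s a a' : (s = s_tri \/ s = s_circ) -> Qs s a' = Qs s a.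
Proof. by move=> hu; rewrite /Qbar !Enext_conc ?V_ge0. Qed.

Lemma Qs_ge0 s a : 0 <= Qs s a.
Proof.
apply: adde_ge0; first by rewrite lee_fin cost_ge0.
by apply: mule_ge0; [rewrite lee_fin|apply: Enext_ge0 => x; exact: V_ge0].
Qed.

Lemma Qs_fin s a : (s = s_tri \/ s = s_circ) -> Qs s a \is a fin_num.
Proof. by move=> hu; rewrite /Qbar Enext_conc ?V_ge0 // fin_numD fin_numM ?V_fin. Qed.

Lemma W_unsafe s a : (s = s_tri \/ s = s_circ) -> Epol pistar s (Qs s) = Qs s a.
Proof.
move=> hu; rewrite /Epol.
rewrite (_ : (fun a' => _) = fun a' => (pistar s a')%:E * Qs s a); last first.
  by apply/funext => a'; rewrite (Qs_unsafe s a a' hu).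
rewrite psumZr ?ps1 ?mul1e //; first exact: Qs_ge0.
by move=> i; rewrite lee_fin ps0.
Qed.

Lemma final s a : U s <= V s ->
  Qs s a - Epol pistar s (Qs s) <= (Qx s a)%:E - U s.
Proof.
move=> UV; have [hs|e|e] := safe_cases s.
- rewrite Qext_safe //; apply: leeB; first exact: Qs_le.
  exact: le_trans UV (W_ge s).
all: have hu : s = s_tri \/ s = s_circ by [left|right].
all: rewrite (W_unsafe s a hu) subee; last exact: Qs_fin.
- by rewrite e Qext_tri U_tri subee.
- by rewrite e Qext_circ U_circ subee.
Qed.
Lemma main_sec s : 0 < occupancy P gamma pi' d0 s -> forall a,
  Qs s a - Epol pistar s (Qs s) <= (Qx s a)%:E - U s.
Proof. by move=> h a; apply: final; exact: occ_reach. Qed.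

End MDP.

Theorem mainTheorem6 (R : realType) (S A : choiceType)
  (P : S -> A -> S -> R) (gamma : R) (d0 : S -> R) (s_tri s_circ : S)
  (pistar : S -> A -> R) (Qb : S -> A -> R) (mu : S -> A -> R)
  (pi : S -> A -> R) :
  (0 <= gamma < 1)%R ->
  is_kernel P ->
  is_dist d0 ->
  s_tri <> s_circ ->
  (forall a, P s_tri a s_circ = 1%R) ->
  (forall a, P s_circ a s_circ = 1%R) ->
  d0 s_circ = 0%R ->
  optimal_policy P gamma s_tri pistar ->
  in_G0 P gamma s_tri s_circ d0 pistar Qb mu ->
  is_policy pi ->
  let pi' := shield s_tri s_circ Qb mu 0%R pi in
  let Qstar := Qbar P gamma s_tri pistar in
  let Astar := fun s a => Qstar s a - Epol pistar s (Qstar s) in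
  let Abar := fun s a =>
    (Qext s_tri s_circ Qb s a)%:E - Qmu s_tri s_circ Qb mu s in
  forall s, 0 < occupancy P gamma pi' d0 s ->
    forall a, Astar s a <= Abar s a.
Proof.
move=> hg hk hd hneq hPt hPc _ hopt hG0 hpi pi' Qstar Astar Abar s hocc a.
rewrite /Astar /Abar /Qstar.
have P0 : forall s a s', (0 <= P s a s')%R by move=> s1 a1 s'; have [h _] := hk s1 a1; exact: h.
case/andP: hg => g0 g1.
by apply: main_sec; eassumption.
Qed.
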